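(* Consider a discrete-time quasi-birth-and-death process (QBD) as described in the context, assumed irreducible and positive recurrent. For $z>0$ let $A(z)=\frac1z A_{-1}+A_0+zA_1$, let $\sigma(z)$ be the Perron–Frobenius eigenvalue of $A(z)$ and $\boldsymbol{u}(z)$ a corresponding strictly positive right eigenvector. Let $z_0$ be the minimal solution of $\sigma'(z)=0$ with $z>1$. Define the vector $\boldsymbol{v}$ on the state space by its level-$i$ subvectors $\boldsymbol{v}_i=z_0^i\,\boldsymbol{u}(z_0)$, $i\ge0$, and let $\lambda_0=\sigma(z_0)$, $C=\ell(0)$ and $$b=\max_{1\le j\le m}\big(B\boldsymbol{v}_0+A_1\boldsymbol{v}_1-\lambda_0\boldsymbol{v}_0\big)_j.$$ Then the drift condition $\mathbf{D}(\boldsymbol{v},\lambda_0,b,C)$ holds.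
   Context: A QBD is a Markov chain $\{X_t\}$ on $\mathbb{E}=\bigcup_{n\ge0}\ell(n)$, $\ell(n)=\{(n,j):1\le j\le m\}$, $m<\infty$, with transition matrix in block form (blocks indexed by levels) whose nonzero blocks are $P_{00}=B$, $P_{01}=A_1$, and for $n\ge1$: $P_{n,n-1}=A_{-1}$, $P_{nn}=A_0$, $P_{n,n+1}=A_1$, where $A_{-1},A_0,A_1,B$ are nonnegative $m\times m$ matrices. Standing assumptions: the chain is irreducible and $A=A_{-1}+A_0+A_1$ is irreducible. Positive recurrence is equivalent to $\boldsymbol{\mu}(A_{-1}-A_1)\boldsymbol{1}>0$, where $\boldsymbol{\mu}$ is the stationary probability vector of $A$. Drift condition $\mathbf{D}(\boldsymbol{v},\lambda,b,C)$: $\boldsymbol{v}$ is a finite vector on $\mathbb{E}$ bounded away from zero, $\lambda\in(0,1)$, $b<\infty$, $C\subset\mathbb{E}$ finite, and $P\boldsymbol{v}\le\lambda\boldsymbol{v}+b\,\mathbb{1}[C]$ componentwise, where $\mathbb{1}[C]$ is the indicator vector of $C$. *)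

(* Defs.v *)
From HB Require Import structures.
From mathcomp Require Import all_boot all_order all_algebra.
From mathcomp Require Import all_classical all_reals all_analysis.
From Stdlib Require Import Relation_Operators.
Set Implicit Arguments. Unset Strict Implicit. Unset Printing Implicit Defensive.
Import Order.TTheory GRing.Theory Num.Theory.
Local Open Scope ring_scope.

Section QBD.
Variables (R : realType) (m : nat).

(* States of E: (n, j) = level n, phase j. *)
Definition state := (nat * 'I_m)%type.

Definition qbd_P (Am1 A0 A1 B : 'M[R]_m) (x y : state) : R :=
  let: (n, i) := x in let: (k, j) := y in
  if n == 0%N then
    (if k == 0%N then B i j else if k == 1%N then A1 i j else 0)
  else if k == n.-1 then Am1 i j
  else if k == n then A0 i j
  else if k == n.+1 then A1 i j else 0.

(* (P v)(x).  Row x = (n,i) of P vanishes outside levels <= n+1, so the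
   (infinite) sum over E reduces to the finite sum below. *)
Definition qbd_Pv (Am1 A0 A1 B : 'M[R]_m) (v : state -> R) (x : state) : R :=
  \sum_(k < x.1.+2) \sum_(j < m) qbd_P Am1 A0 A1 B x (nat_of_ord k, j) * v (nat_of_ord k, j).

Definition chain_irreducible (P : state -> state -> R) : Prop :=
  forall x y : state, clos_trans state (fun a b => 0 < P a b) x y.

Definition mx_irreducible (M : 'M[R]_m) : Prop :=
  forall i j : 'I_m, clos_trans 'I_m (fun a b => 0 < M a b) i j.

Definition mx_nonneg (M : 'M[R]_m) : Prop := forall i j, 0 <= M i j.

Definition indic (C : state -> Prop) (x : state) : R :=
  if `[< C x >] then 1 else 0.

Definition drift_cond (Pv : (state -> R) -> state -> R)
    (v : state -> R) (lam b : R) (C : state -> Prop) : Prop :=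
  (exists c : R, 0 < c /\ forall x, c <= v x) /\
  0 < lam < 1 /\
  (exists N : nat, forall x, C x -> (x.1 < N)%N) /\
  forall x, Pv v x <= lam * v x + b * indic C x.

Definition Az (Am1 A0 A1 : 'M[R]_m) (z : R) : 'M[R]_m :=
  z^-1 *: Am1 + A0 + z *: A1.

End QBD.

(* Main.v *)
Require Import Defs.
From HB Require Import structures.
From mathcomp Require Import all_boot all_order all_algebra.
From mathcomp Require Import all_classical all_reals all_analysis.
From mathcomp Require Import ring lra zify.
Import Order.TTheory GRing.Theory Num.Theory.
Set Implicit Arguments. Unset Strict Implicit. Unset Printing Implicit Defensive.
Local Open Scope ring_scope.
Import numFieldNormedType.Exports.

Section Aux.
Variable R : realType.

Lemma amgm (a b t : R) : 0 <= a -> 0 <= b -> 0 < t < 1 ->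
  a `^ t * b `^ (1 - t) <= t * a + (1 - t) * b.
Proof.
move=> a0 b0 /andP[t0 t1].
have s0 : 0 < 1 - t by rewrite subr_gt0.
have it0 : 0 < t^-1 by rewrite invr_gt0.
have is0 : 0 < (1 - t)^-1 by rewrite invr_gt0.
have := @conjugate_powR R (a `^ t) (b `^ (1 - t)) t^-1 (1 - t)^-1
  (powR_ge0 _ _) (powR_ge0 _ _) it0 is0.
rewrite !invrK addrC subrK => /(_ erefl).
rewrite -!powRrM !mulfV ?gt_eqF // !powRr1 //.
by rewrite [a * t]mulrC [b * _]mulrC.
Qed.

Lemma holder (I : finType) (p q : I -> R) (t : R) :
  (forall k, 0 <= p k) -> (forall k, 0 <= q k) -> 0 < t < 1 ->
  \sum_k p k `^ t * q k `^ (1 - t) <= (\sum_k p k) `^ t * (\sum_k q k) `^ (1 - t).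
Proof.
move=> p0 q0 /andP[t0 t1].
have s0 : 0 < 1 - t by rewrite subr_gt0.
have P0 : 0 <= \sum_k p k by apply: sumr_ge0.
have Q0 : 0 <= \sum_k q k by apply: sumr_ge0.
have [PE|Pn0] := eqVneq (\sum_k p k) 0.
  rewrite big1 ?mulr_ge0 ?powR_ge0 // => k _.
  have /psumr_eq0P Hp : \sum_(k | true) p k = 0 by [].
  by rewrite Hp // powR0 ?gt_eqF // mul0r.
have [QE|Qn0] := eqVneq (\sum_k q k) 0.
  rewrite big1 ?mulr_ge0 ?powR_ge0 // => k _.
  have /psumr_eq0P Hq : \sum_(k | true) q k = 0 by [].
  by rewrite Hq // powR0 ?gt_eqF // mulr0.
set P := \sum_k p k in P0 Pn0 *; set Q := \sum_k q k in Q0 Qn0 *.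
have Pp : 0 < P by rewrite lt_neqAle eq_sym Pn0.
have Qp : 0 < Q by rewrite lt_neqAle eq_sym Qn0.
have hE : forall k, p k `^ t * q k `^ (1 - t) =
   P `^ t * Q `^ (1 - t) * ((p k / P) `^ t * (q k / Q) `^ (1 - t)).
  move=> k.
  rewrite -{1}(divfK Pn0 (p k)) -{1}(divfK Qn0 (q k)).
  rewrite (@powRM _ (p k / P) P) ?divr_ge0 ?(ltW Pp) ?(ltW Qp) //.
  rewrite (@powRM _ (q k / Q) Q) ?divr_ge0 ?(ltW Pp) ?(ltW Qp) //.
  ring.
rewrite (eq_bigr _ (fun k _ => hE k)).
rewrite -mulr_sumr ler_piMr ?mulr_ge0 ?powR_ge0 //.
have t01 : 0 < t < 1 by rewrite t0 t1.
apply: (@le_trans _ _ (\sum_k (t * (p k / P) + (1 - t) * (q k / Q)))).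
  apply: ler_sum => k _.
  by apply: amgm => //; apply: divr_ge0 => //; exact: ltW.
rewrite big_split /= -!mulr_sumr -!mulr_suml -/P -/Q !mulfV // !mulr1.
by rewrite addrC subrK.
Qed.

Lemma subinv (m : nat) (i0 : 'I_m) (M : 'M[R]_m) (x u : 'cV[R]_m) (c s : R) :
  mx_nonneg M -> (forall j, 0 < x j 0) -> (forall j, 0 < u j 0) ->
  (forall i, (M *m x) i 0 <= c * x i 0) -> M *m u = s *: u -> s <= c.
Proof.
move=> M0 x0 u0 Mx Mu.
case: (@arg_maxP _ R _ i0 xpredT (fun j => u j 0 / x j 0) isT) => i _ Hi.
set F := u i 0 / x i 0 in Hi.
have Fp : 0 <= F by rewrite divr_ge0 // ltW.
have key : s * u i 0 <= c * u i 0.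
  have -> : s * u i 0 = (M *m u) i 0 by rewrite Mu mxE.
  rewrite mxE.
  apply: (@le_trans _ _ (F * (M *m x) i 0)).
    rewrite mxE mulr_sumr; apply: ler_sum => j _.
    rewrite mulrCA; apply: ler_wpM2l; first exact: M0.
    by have := Hi j isT; rewrite /= ler_pdivrMr // mulrC.
  apply: (@le_trans _ _ (F * (c * x i 0))); first by apply: ler_wpM2l.
  by rewrite /F mulrCA divfK ?gt_eqF.
by rewrite -(ler_pM2r (u0 i)).
Qed.

Lemma supinv (m : nat) (i0 : 'I_m) (M : 'M[R]_m) (x u : 'cV[R]_m) (c s : R) :
  mx_nonneg M -> (forall j, 0 < x j 0) -> (forall j, 0 < u j 0) ->
  (forall i, c * x i 0 <= (M *m x) i 0) -> M *m u = s *: u -> c <= s.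
Proof.
move=> M0 x0 u0 Mx Mu.
case: (@arg_minP _ R _ i0 xpredT (fun j => u j 0 / x j 0) isT) => i _ Hi.
set F := u i 0 / x i 0 in Hi.
have Fp : 0 <= F by rewrite divr_ge0 // ltW.
have key : c * u i 0 <= s * u i 0.
  have -> : s * u i 0 = (M *m u) i 0 by rewrite Mu mxE.
  apply: (@le_trans _ _ (F * (M *m x) i 0)); last first.
    rewrite !mxE mulr_sumr; apply: ler_sum => j _.
    rewrite mulrCA; apply: ler_wpM2l; first exact: M0.
    by have := Hi j isT; rewrite /= ler_pdivlMr // mulrC.
  apply: (@le_trans _ _ (F * (c * x i 0))); last by apply: ler_wpM2l.
  by rewrite /F mulrCA divfK ?gt_eqF.
by rewrite -(ler_pM2r (u0 i)).
Qed.

End Aux.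

Section Spec.
Variables (R : realType) (m : nat) (Am1 A0 A1 : 'M[R]_m).
Variables (sigma : R -> R) (u : R -> 'cV[R]_m).
Hypotheses (hm1 : mx_nonneg Am1) (hm0 : mx_nonneg A0) (hp1 : mx_nonneg A1).
Hypothesis Hu : forall z, 0 < z -> (forall j, 0 < u z j 0) /\
   Az Am1 A0 A1 z *m u z = sigma z *: u z.

Lemma AzE z i j : Az Am1 A0 A1 z i j = z^-1 * Am1 i j + A0 i j + z * A1 i j.
Proof. by rewrite !mxE. Qed.

Lemma Az_nonneg z : 0 < z -> mx_nonneg (Az Am1 A0 A1 z).
Proof.
move=> z0 i j; rewrite AzE.
have zi : 0 <= z^-1 by rewrite invr_ge0 ltW.
by rewrite !addr_ge0 ?mulr_ge0 // ltW.
Qed.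

Lemma Azu z i : 0 < z -> (Az Am1 A0 A1 z *m u z) i 0 = sigma z * u z i 0.
Proof. by move=> z0; rewrite (proj2 (Hu z0)) mxE. Qed.

Lemma sigma_ge0 (i0 : 'I_m) z : 0 < z -> 0 <= sigma z.
Proof.
move=> z0; have := Azu i0 z0; rewrite mxE => e.
have : 0 <= sigma z * u z i0 0.
  rewrite -e; apply: sumr_ge0 => j _; apply: mulr_ge0.
    exact: Az_nonneg.
  exact: ltW (proj1 (Hu z0) j).
by rewrite pmulr_lge0 // (proj1 (Hu z0)).
Qed.

Definition pt (z : R) (w : 'cV[R]_m) i (s : ('I_m + 'I_m) + 'I_m) : R :=
  match s with
  | inl (inl j) => z^-1 * Am1 i j * w j 0
  | inl (inr j) => 1 * A0 i j * w j 0
  | inr j => z * A1 i j * w j 0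
  end.

Lemma sum_pt (z : R) (w : 'cV[R]_m) (i : 'I_m) : \sum_s pt z w i s = (Az Am1 A0 A1 z *m w) i 0.
Proof.
rewrite !big_sumType /= mxE -!big_split /=; apply: eq_bigr => j _.
rewrite AzE; ring.
Qed.

Lemma invpowR (x t : R) : 0 < x -> (x^-1) `^ t = (x `^ t)^-1.
Proof.
move=> x0; rewrite /powR !gt_eqF ?invr_gt0 //.
by rewrite lnV ?posrE // mulrN expRN.
Qed.

Lemma triple (al1 al2 a w1 w2 t : R) : 0 <= al1 -> 0 <= al2 -> 0 <= a ->
  0 <= w1 -> 0 <= w2 -> 0 < t < 1 ->
  (al1 * a * w1) `^ t * (al2 * a * w2) `^ (1 - t) =
  al1 `^ t * al2 `^ (1 - t) * a * (w1 `^ t * w2 `^ (1 - t)).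
Proof.
move=> h1 h2 ha hw1 hw2 /andP[t0 t1].
have ea : a `^ t * a `^ (1 - t) = a.
  rewrite -powRD; first by rewrite addrC subrK powRr1.
  by rewrite addrC subrK oner_eq0.
rewrite !powRM ?mulr_ge0 //.
rewrite -[in RHS]ea; ring.
Qed.

Lemma pt_ge0 (z : R) (w : 'cV[R]_m) (i : 'I_m) s : 0 < z -> (forall j, 0 <= w j 0) -> 0 <= pt z w i s.
Proof.
move=> z0 w0; have zi : 0 <= z^-1 by rewrite invr_ge0 ltW.
by case: s => [[j|j]|j] /=; rewrite !mulr_ge0 // ltW.
Qed.

Lemma logconv (i0 : 'I_m) z1 z2 t : 0 < z1 -> 0 < z2 -> 0 < t < 1 ->
  sigma (z1 `^ t * z2 `^ (1 - t)) <= sigma z1 `^ t * sigma z2 `^ (1 - t).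
Proof.
move=> z1p z2p t01.
set z := z1 `^ t * z2 `^ (1 - t).
have zp : 0 < z by rewrite mulr_gt0 // powR_gt0.
pose x : 'cV[R]_m := \col_j (u z1 j 0 `^ t * u z2 j 0 `^ (1 - t)).
have xp : forall j, 0 < x j 0.
  by move=> j; rewrite mxE mulr_gt0 // powR_gt0 // (proj1 (Hu _)).
have u1 := proj1 (Hu z1p); have u2 := proj1 (Hu z2p).
apply: (subinv i0 (Az_nonneg zp) xp (proj1 (Hu zp)) _ (proj2 (Hu zp))).
move=> i.
have -> : sigma z1 `^ t * sigma z2 `^ (1 - t) * x i 0 =
   (\sum_s pt z1 (u z1) i s) `^ t * (\sum_s pt z2 (u z2) i s) `^ (1 - t).
  rewrite !sum_pt !Azu // mxE !powRM ?(sigma_ge0 i0) // ?ltW //.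
  ring.
rewrite -sum_pt.
have -> : \sum_s pt z x i s =
   \sum_s (pt z1 (u z1) i s) `^ t * (pt z2 (u z2) i s) `^ (1 - t).
  apply: eq_bigr => s _.
  have z1i : 0 <= z1^-1 by rewrite invr_ge0 ltW.
  have z2i : 0 <= z2^-1 by rewrite invr_ge0 ltW.
  case: s => [[j|j]|j] /=; rewrite triple // ?mxE //; try exact: ltW.
  - by rewrite /z !invpowR // -invfM.
  - by rewrite /powR oner_eq0 ln1 !mulr0 expR0 !mul1r.
apply: holder => [s|s|//]; apply: pt_ge0 => // j; exact: ltW.
Qed.

End Spec.

Lemma deriv_eps (R : realType) (f : R -> R) (a : R) : is_derive a 1 f 0 ->
  forall e, 0 < e -> exists2 d, 0 < d &
    forall h, `|h| < d -> `|f (a + h) - f a| <= e * `|h|.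
Proof.
move=> [df dv] e ep.

move/cvgr_dist_le : df => /(_ e ep).
rewrite near_withinE => /nbhs_ballP [d dp H].
exists d => // h hd.
have [->|hn0] := eqVneq h 0; first by rewrite addr0 subrr normr0 mulr0.
have := H h; rewrite /ball /= sub0r normrN => /(_ hd hn0).
rewrite -/(derive f a 1) dv sub0r normrN /= normrZ normfV ler_pdivrMl ?normr_gt0 //.
have -> : h%:A = h by rewrite /GRing.scale /= mulr1.
by rewrite [e * _]mulrC [h + a]addrC.
Qed.
Lemma L3 (R : realType) (sigma : R -> R) (z0 : R) :
  0 < sigma z0 -> 0 < z0 -> is_derive z0 1 sigma 0 ->
  (forall z t, 0 < z -> 0 < t < 1 ->
     sigma (z `^ t * z0 `^ (1 - t)) <= sigma z `^ t * sigma z0 `^ (1 - t)) ->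
  forall z, 0 < z -> z <= z0 -> 0 <= sigma z -> sigma z0 <= sigma z.
Proof.
move=> s0p z0p der lc z zp zle Sz.
rewrite leNgt; apply/negP => Hlt.
have zlt : z < z0.
  rewrite lt_neqAle zle andbT; apply/eqP => ez; move: Hlt; rewrite ez ltxx //.
set s0 := sigma z0 in s0p Hlt lc *.
set r := sigma z / s0.
have r0 : 0 <= r by rewrite divr_ge0 // ltW.
have r1 : r < 1 by rewrite ltr_pdivrMr // mul1r.
have Sr : sigma z = r * s0 by rewrite /r divfK ?gt_eqF.
set q := z / z0.
have q0 : 0 < q by rewrite divr_gt0.
have q1 : q < 1 by rewrite ltr_pdivrMr // mul1r.
set K := q^-1 - 1.
have Kp : 0 < K by rewrite subr_gt0 invf_gt1.
pose eps := s0 * (1 - r) / (2 * z0 * K).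
have epsp : 0 < eps by rewrite divr_gt0 ?mulr_gt0 // subr_gt0.
have [d dp Hd] := deriv_eps der epsp.
pose th := Num.min (2^-1) (d / (2 * z0 * K)).
have thp : 0 < th by rewrite lt_min invr_gt0 ltr0n /= divr_gt0 ?mulr_gt0.
have th2 : th <= 2^-1 by rewrite ge_min lexx.
have thd : th <= d / (2 * z0 * K) by rewrite ge_min lexx orbT.
have th01 : 0 < th < 1.
  by rewrite thp /=; apply: (le_lt_trans th2); rewrite invf_lt1 // ltr1n.
have ez : z = q * z0 by rewrite /q divfK ?gt_eqF.
have ez0 : z0 `^ th * z0 `^ (1 - th) = z0.
  rewrite -powRD; first by rewrite addrC subrK powRr1 // ltW.
  by rewrite addrC subrK oner_eq0.
have es0 : s0 `^ th * s0 `^ (1 - th) = s0.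
  rewrite -powRD; first by rewrite addrC subrK powRr1 // ltW.
  by rewrite addrC subrK oner_eq0.
set zt := z `^ th * z0 `^ (1 - th).
have ezt : zt = z0 * q `^ th.
  by rewrite /zt ez powRM ?ltW // -mulrA ez0 mulrC.
set Y := (q^-1) `^ th.
have Y1 : 1 <= Y.
  rewrite /Y -(powRr0 (q^-1)); apply: ler_powR; last exact: ltW.
  by rewrite ltW // invf_gt1.
have YK : Y <= 1 + th * K.
  have qi : 0 < q^-1 by rewrite invr_gt0.
  have := amgm (ltW qi) ler01 th01.
  rewrite powR1 mulr1 -/Y => h; apply: (le_trans h); rewrite /K; lra.
have eqY : q `^ th = Y^-1 by rewrite /Y invpowR ?invr_gt0 // invrK.
have hq1 : 0 <= 1 - q `^ th <= th * K.
  rewrite eqY; apply/andP; split.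
    by rewrite subr_ge0 invf_le1 // (lt_le_trans ltr01 Y1).
  have Yp : 0 < Y by apply: lt_le_trans Y1.
  have : 1 - Y^-1 <= Y - 1.
    have hw : Y * Y^-1 = 1 by rewrite mulfV // lt0r_neq0.
    have w1 : Y^-1 <= 1 by rewrite invf_le1.
    have a1 : 0 <= Y - 1 by rewrite subr_ge0.
    have a2 : 0 <= 1 - Y^-1 by rewrite subr_ge0.
    have := mulr_ge0 a1 a2.
    nra.
  lra.
have lcz := lc z th zp th01; rewrite -/zt Sr (powRM _ r0 (ltW s0p)) in lcz.
rewrite -mulrA es0 in lcz.
have amr := amgm r0 ler01 th01; rewrite powR1 mulr1 in amr.
have hh : `|zt - z0| < d.
  rewrite ezt -{2}[z0]mulr1 -mulrBr normrM gtr0_norm // distrC.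
  rewrite ger0_norm; last by case/andP: hq1.
  apply: (@le_lt_trans _ _ (z0 * (th * K))).
    by apply: ler_wpM2l; [exact: ltW | case/andP: hq1].
  rewrite ler_pdivlMr ?mulr_gt0 // in thd.
  apply: (@le_lt_trans _ _ (d / 2)); first by move: thd; nra.
  lra.
have := Hd _ hh; rewrite [z0 + _]addrC subrK => hd.
have habs : `|zt - z0| <= z0 * (th * K).
  rewrite ezt -{2}[z0]mulr1 -mulrBr normrM gtr0_norm // distrC.
  rewrite ger0_norm; last by case/andP: hq1.
  by apply: ler_wpM2l; [exact: ltW | case/andP: hq1].
have h1 : s0 - sigma zt <= eps * (z0 * (th * K)).
  apply: (le_trans _ (le_trans hd _)); first by rewrite distrC ler_norm.
  by rewrite ler_wpM2l // ltW.
have e2 : eps * (z0 * (th * K)) = s0 * (1 - r) * th / 2.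
  rewrite /eps; field; rewrite ?gt_eqF //.
have : s0 * th * (1 - r) <= s0 * (1 - r) * th / 2.
  rewrite -e2; apply: le_trans h1.
  have : s0 * r `^ th <= s0 * (th * r + (1 - th)).
    by apply: ler_wpM2l; [exact: ltW | rewrite mulr1 in amr].
  lra.
have : 0 < s0 * th * (1 - r) by rewrite !mulr_gt0 // subr_gt0.
lra.
Qed.

Theorem lemma3p1 (R : realType) (m : nat) (Am1 A0 A1 B : 'M[R]_m)
  (mu : 'rV[R]_m) (sigma : R -> R) (u : R -> 'cV[R]_m) (z0 b : R) :
  (* nonnegative blocks, forming a stochastic matrix *)
  mx_nonneg Am1 -> mx_nonneg A0 -> mx_nonneg A1 -> mx_nonneg B ->
  (forall i, \sum_j (B i j + A1 i j) = 1) ->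
  (forall i, \sum_j (Am1 i j + A0 i j + A1 i j) = 1) ->
  (* standing assumptions: chain irreducible, A irreducible *)
  chain_irreducible (qbd_P Am1 A0 A1 B) ->
  mx_irreducible (Am1 + A0 + A1) ->
  (* mu stationary probability vector of A; positive recurrence *)
  (forall j, 0 <= mu 0 j) -> \sum_j mu 0 j = 1 -> mu *m (Am1 + A0 + A1) = mu ->
  0 < (mu *m (Am1 - A1) *m (const_mx 1 : 'cV[R]_m)) 0 0 ->
  (* sigma(z), u(z): Perron-Frobenius eigenvalue and positive right eigenvector *)
  (forall z, 0 < z -> (forall j, 0 < u z j 0) /\ Az Am1 A0 A1 z *m u z = sigma z *: u z) ->
  (* z0: minimal solution of sigma'(z) = 0 with z > 1 *)
  1 < z0 -> is_derive z0 1 sigma 0 ->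
  (forall z, 1 < z < z0 -> ~ is_derive z 1 sigma 0) ->
  (* b = max_j (B v0 + A1 v1 - lambda0 v0)_j *)
  let v := fun x : state m => z0 ^+ x.1 * u z0 x.2 0 in
  let w := fun j : 'I_m =>
    (B *m u z0 + z0 *: (A1 *m u z0) - sigma z0 *: u z0) j 0 in
  (exists j, b = w j) -> (forall j, w j <= b) ->
  drift_cond (qbd_Pv Am1 A0 A1 B) v (sigma z0) b (fun x : state m => x.1 = 0%N).
Proof.
move=> hm1 hm0 hp1 hB hrowB hrowA _ _ hmu0 hmus _ _ Hu hz0 hder hmin v w _ hbw.
have m0 : (0 < m)%N.
  rewrite lt0n; apply/negP => /eqP em; subst m.
  by move: hmus; rewrite big_ord0 => /eqP; rewrite eq_sym oner_eq0.
pose i0 : 'I_m := Ordinal m0.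
have z0p : 0 < z0 by apply: lt_trans hz0.
pose one : 'cV[R]_m := const_mx 1.
have one_p : forall j, 0 < one j 0 by move=> j; rewrite mxE.
have Az1 : forall i, (Az Am1 A0 A1 1 *m one) i 0 = 1.
  move=> i; rewrite mxE -[RHS](hrowA i); apply: eq_bigr => j _.
  by rewrite AzE invr1 !mul1r mxE mulr1.
have s1 : sigma 1 = 1.
  apply/eqP; rewrite eq_le; apply/andP; split.
    apply: (subinv i0 (Az_nonneg hm1 hm0 hp1 ltr01) one_p (proj1 (Hu _ ltr01)) _
      (proj2 (Hu _ ltr01))).
    by move=> i; rewrite Az1 mxE mulr1.
  apply: (supinv i0 (Az_nonneg hm1 hm0 hp1 ltr01) one_p (proj1 (Hu _ ltr01)) _
      (proj2 (Hu _ ltr01))).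
  by move=> i; rewrite Az1 mxE mulr1.
have sgt0 : forall z, 1 <= z -> 0 < sigma z.
  move=> z z1; have zp : 0 < z by apply: lt_le_trans z1.
  have zi : 0 < z^-1 by rewrite invr_gt0.
  apply: (lt_le_trans zi).
  apply: (supinv i0 (Az_nonneg hm1 hm0 hp1 zp) one_p (proj1 (Hu _ zp)) _
      (proj2 (Hu _ zp))).
  move=> i; rewrite [one i 0]mxE mulr1 -[z^-1]mulr1 -(hrowA i) mulr_sumr mxE.
  apply: ler_sum => j _; rewrite AzE [one j 0]mxE mulr1 !mulrDr.
  have zi1 : z^-1 <= 1 by rewrite invf_le1.
  have zz : z^-1 <= z by apply: le_trans zi1 z1.
  rewrite lerD // ?lerD //.
    by rewrite ler_piMl.
  by apply: ler_wpM2r.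
have s0p : 0 < sigma z0 by apply: sgt0; apply: ltW.
have lc : forall z t, 0 < z -> 0 < t < 1 ->
     sigma (z `^ t * z0 `^ (1 - t)) <= sigma z `^ t * sigma z0 `^ (1 - t).
  by move=> z t zp t01; apply: (logconv hm1 hm0 hp1 Hu i0 zp z0p t01).
have L : forall z, 0 < z -> z <= z0 -> sigma z0 <= sigma z.
  move=> z zp zle; apply: (L3 s0p z0p hder lc zp zle).
  exact: (sigma_ge0 hm1 hm0 hp1 Hu i0 zp).
have s0le1 : sigma z0 <= 1 by rewrite -s1; apply: L => //; apply: ltW.
have s0lt1 : sigma z0 < 1.
  rewrite lt_neqAle s0le1 andbT; apply/negP => /eqP s01.
  have eq1 : forall y, 1 < y < z0 -> sigma y = 1.
    move=> y /andP[y1 yz]; have yp : 0 < y by apply: lt_trans y1.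
    apply/eqP; rewrite eq_le; apply/andP; split; last by rewrite -s01 L // ltW.
    have lz0 : 0 < ln z0 by rewrite ln_gt0.
    have ly : 0 < ln y by rewrite ln_gt0.
    have lyz : ln y < ln z0 by rewrite ltr_ln.
    pose t := 1 - ln y / ln z0.
    have t01 : 0 < t < 1.
      rewrite /t subr_gt0 ltr_pdivrMr // mul1r lyz /=.
      by rewrite ltrBlDr ltrDl divr_gt0.
    have := lc 1 t ltr01 t01.
    rewrite s01 s1 !powR1 mul1r mulr1.
    have -> : z0 `^ (1 - t) = y.
      rewrite /t opprB addrC subrK /powR gt_eqF // divfK ?gt_eqF //.
      by rewrite lnK.
    by [].
  pose zm := (1 + z0) / 2.
  have zm1 : 1 < zm < z0 by apply/andP; split; rewrite /zm; lra.
  apply: (hmin _ zm1).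
  apply: (@near_eq_is_derive R R R (cst 1) sigma zm 1 0).
    apply/nbhs_ballP; exists ((z0 - 1) / 2); first by rewrite /= divr_gt0 // subr_gt0.
    move=> y /=; rewrite /ball /= ltr_distlC => /andP[h1 h2].
    rewrite eq1 //; apply/andP; split; rewrite /zm in h1 h2; lra.
split.
  case: (@arg_minP _ R _ i0 xpredT (fun j => u z0 j 0) isT) => jm _ Hjm.
  exists (u z0 jm 0); split; first exact: (proj1 (Hu _ z0p)).
  case=> n j; rewrite /v /=.
  apply: (le_trans (Hjm j isT)).
  rewrite ler_peMl ?exprn_ege1 ?ltW //.
  exact: (proj1 (Hu _ z0p)).
split; first by rewrite s0p.
split; first by exists 1%N => [[n j]] /= ->.
have uz := proj1 (Hu _ z0p).
case=> n i; rewrite /qbd_Pv /=.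
case: n => [|p].
  rewrite !big_ord_recl big_ord0 addr0 /=.
  have hb := hbw i; rewrite /w !mxE in hb.
  have -> : bump 0 0 = 1%N by [].
  rewrite /Defs.indic /= asboolT // mulr1 /v /= expr0 expr1 mul1r.
  under eq_bigr do rewrite mul1r.
  have e1 : \sum_j A1 i j * (z0 * u z0 j 0) = z0 * \sum_j A1 i j * u z0 j 0.
    by rewrite mulr_sumr; apply: eq_bigr => j _; rewrite mulrCA.
  rewrite e1.
  lra.
set G := fun k : nat => \sum_(j < m)
   qbd_P Am1 A0 A1 B (p.+1, i) (k, j) * v (k, j).
have -> : \sum_(k < p.+3) \sum_(j < m)
    qbd_P Am1 A0 A1 B (p.+1, i) (nat_of_ord k, j) * v (nat_of_ord k, j)
    = \sum_(k < p.+3) G k by [].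
rewrite -(big_mkord xpredT G) !big_nat_recr //=.
rewrite big_nat big1 ?add0r; last first.
  move=> k /andP[_ kp]; rewrite /G big1 // => j _.
  by rewrite /qbd_P /= !ifF ?mul0r //; apply/negbTE/eqP; lia.
have n1 : (p.+1 == p) = false by apply/negbTE/eqP; lia.
have n2 : (p.+2 == p) = false by apply/negbTE/eqP; lia.
have n3 : (p.+2 == p.+1) = false by apply/negbTE/eqP; lia.
rewrite /G /qbd_P /= eqxx n1 n2 n3 !eqxx.
rewrite /Defs.indic /= asboolF // mulr0 addr0.
have z0n : z0 != 0 by rewrite gt_eqF.
rewrite /v /= mulrCA -(Azu Hu i z0p) mxE mulr_sumr -!big_split /=.
apply: ler_sum => j _; rewrite AzE !exprS.
rewrite le_eqVlt; apply/orP; left; apply/eqP; field.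
exact: z0n.
Qed.
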